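(* Let $\mathcal{C}=(C_\varepsilon,D_{\varepsilon,\varepsilon'})_{\varepsilon\in\mathbb{E}_n}$ be a hypercube of chain complexes of finite-dimensional $\mathbb{C}$-vector spaces and $\mu$ a hypercube operator on $\mathcal{C}$. Suppose there is $\lambda\in\mathbb{C}$ such that for every $\varepsilon$, the map induced by $\mu_{\varepsilon,\varepsilon}$ on $H_*(C_\varepsilon,D_{\varepsilon,\varepsilon})$ has $\lambda$ as its only eigenvalue (i.e. its generalized $\lambda$-eigenspace is all of $H_*(C_\varepsilon)$). Then for every $r\in\mathbb{C}$ and every splitting map, the eigenspace hypercube $E^r(\mathcal{C},\mu)$ is homotopy equivalent (as a hypercube) to $\mathcal{C}$ if $r=\lambda$, and to the zero hypercube if $r\neq\lambda$.
   Context: $\mathbb{E}_n=\{0,1\}^n$ with coordinatewise order. A hypercube of chain complexes: spaces $C_\varepsilon$, maps $D_{\varepsilon,\varepsilon'}$ for $\varepsilon\le\varepsilon'$ whose total $D_{\mathrm{Tot}}$ squares to zero. A hypercube operator is a linear map $\mu$ of $\bigoplus C_\varepsilon$ preserving the filtration $C_{\ge\varepsilon}=\bigoplus_{\varepsilon'\ge\varepsilon}C_{\varepsilon'}$ and commuting with $D_{\mathrm{Tot}}$; $\mu_{\varepsilon,\varepsilon}$ is its component $C_\varepsilon\to C_\varepsilon$, a chain map. For $r\in\mathbb{C}$, $E^r(\mathcal{C},\mu)$ is the hypercube with vertex spaces $E^r_\varepsilon$ (generalized $r$-eigenspace of $\mu_{\varepsilon,\varepsilon}$ on $C_\varepsilon$)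 and total structure map $\Phi^{-1}D_{\mathrm{Tot}}\Phi$, where $\Phi\colon\bigoplus E^r_\varepsilon\to e^r$ is a splitting map into the generalized $r$-eigenspace $e^r$ of $\mu$ on the total space (a linear map sending $E^r_\varepsilon$ into $e^r\cap C_{\ge\varepsilon}$ and inducing the identity on $E^r_\varepsilon$ after projecting to $C_\varepsilon$). Homotopy equivalence of hypercubes means morphisms (collections of maps $F_{\varepsilon,\varepsilon'}$, $\varepsilon\le\varepsilon'$) in both directions that are cycles and whose composites are homotopic to the identities via such morphisms. *)

(* Defs.v *)
From HB Require Import structures.
From mathcomp Require Import all_boot all_order all_algebra.
From mathcomp Require Import complex reals.

Set Implicit Arguments.
Unset Strict Implicit.
Unset Printing Implicit Defensive.

Import GRing.Theory.
Local Open Scope ring_scope.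

Definition cube (n : nat) := {ffun 'I_n -> bool}.

Definition cle n (e e' : cube n) : bool := [forall i, e i ==> e' i].

Section Hyper.
Variables (K : fieldType) (n : nat).

Definition vfam := cube n -> vectType K.

(* A "collection of maps" F_{e,e'} : A_e -> B_{e'}; only the components
   with e <= e' are ever used (the others are irrelevant junk). *)
Definition hmaps (A B : vfam) := forall e e' : cube n, 'Hom(A e, B e').

Definition compH (A B C : vfam) (G : hmaps B C) (F : hmaps A B) : hmaps A C :=
  fun e e'' => \sum_(e' | cle e e' && cle e' e'') (G e' e'' \o F e e')%VF.

Definition is_hypercube (A : vfam) (D : hmaps A A) : Prop :=
  forall e e'', cle e e'' -> compH D D e e'' = 0.

Definition hcycle (A B : vfam) (DA : hmaps A A) (DB : hmaps B B)
  (F : hmaps A B) : Prop :=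
  forall e e'', cle e e'' -> compH DB F e e'' = compH F DA e e''.

Definition homotopic_id (A : vfam) (DA : hmaps A A) (P H : hmaps A A) : Prop :=
  (forall e, P e e = (\1%VF + compH DA H e e + compH H DA e e)) /\
  (forall e e'', cle e e'' -> e != e'' ->
     P e e'' = compH DA H e e'' + compH H DA e e'').

Definition hyper_htpy_equiv (A B : vfam) (DA : hmaps A A) (DB : hmaps B B)
  : Prop :=
  exists (F : hmaps A B) (G : hmaps B A) (HA : hmaps A A) (HB : hmaps B B),
    [/\ hcycle DA DB F, hcycle DB DA G,
        homotopic_id DA (compH G F) HA & homotopic_id DB (compH F G) HB].

(* Hypercube operator mu on (C, D): commutes with D_Tot (preservation of
   the filtration is built into the componentwise representation). *)
Definition hyper_operator (C : vfam) (D : hmaps C C) (mu : hmaps C C) : Prop :=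
  forall e e'', cle e e'' -> compH mu D e e'' = compH D mu e e''.

(* Application of a total map to an element of the total space
   (an element of the direct sum is a family x_e in C_e). *)
Definition totApp (A B : vfam) (F : hmaps A B) (x : forall e, A e) :
  forall e', B e' :=
  fun e' => \sum_(e | cle e e') F e e' (x e).

Definition in_tot_geig (C : vfam) (mu : hmaps C C) (r : K)
  (x : forall e, C e) : Prop :=
  exists N : nat, forall e,
    iter N (fun y : forall e, C e => fun e' => totApp mu y e' - r *: y e') x e
    = 0.

End Hyper.

Definition powsub (K : fieldType) (V : vectType K) (f : 'End(V)) (r : K)
  (N : nat) : 'End(V) :=
  iter N (fun g => ((f - r *: \1%VF) \o g)%VF) \1%VF.

Definition geig (K : fieldType) (V : vectType K) (f : 'End(V)) (r : K)
  : {vspace V} :=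
  lker (powsub f r (\dim {:V})).

Definition Evtx (K : fieldType) n (C : vfam K n) (mu : hmaps C C) (r : K)
  : vfam K n :=
  fun e => (subvs_of (geig (mu e e) r) : vectType K).

Definition splitting_map (K : fieldType) n (C : vfam K n) (mu : hmaps C C)
  (r : K) (Phi : hmaps (Evtx mu r) C) : Prop :=
  (forall e (v : Evtx mu r e),
     in_tot_geig mu r (fun e' => if cle e e' then Phi e e' v else 0)) /\
  (forall e (v : Evtx mu r e), Phi e e v = vsval v).

Definition zero_vtx (K : fieldType) n : vfam K n :=
  fun _ => ('rV[K]_0 : vectType K).
Definition zero_maps (K : fieldType) n : hmaps (@zero_vtx K n) (@zero_vtx K n)
  := fun _ _ => 0.

(* Main.v *)
Require Import Defs.
From HB Require Import structures.
From mathcomp Require Import all_boot all_order all_algebra.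
From mathcomp Require Import complex reals.
Set Implicit Arguments. Unset Strict Implicit. Unset Printing Implicit Defensive.
Import GRing.Theory.
Local Open Scope ring_scope.

Section Cube.
Variable n : nat.
Implicit Types e : cube n.
Lemma cle_refl e : cle e e.
Proof. by apply/forallP=> i; apply/implyP. Qed.
Lemma cle_trans e1 e2 e3 : cle e1 e2 -> cle e2 e3 -> cle e1 e3.
Proof.
move=> /forallP h1 /forallP h2; apply/forallP=> i; apply/implyP=> h.
by move/implyP: (h2 i); apply; move/implyP: (h1 i); apply.
Qed.
Lemma cle_anti e1 e2 : cle e1 e2 -> cle e2 e1 -> e1 = e2.
Proof.
move=> /forallP h1 /forallP h2; apply/ffunP=> i.
move: (h1 i) (h2 i); case: (e1 i); case: (e2 i) => //.
Qed.
Definition sz e := #|[set i | e i]|.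
Lemma cle_sub e1 e2 : cle e1 e2 -> [set i | e1 i] \subset [set i | e2 i].
Proof.
move=> /forallP h; apply/subsetP=> i; rewrite !inE => h1.
by move/implyP: (h i); apply.
Qed.
Lemma sub_cle e1 e2 : [set i | e1 i] \subset [set i | e2 i] -> cle e1 e2.
Proof.
move=> /subsetP h; apply/forallP=> i; apply/implyP=> h1.
by have := h i; rewrite !inE; apply.
Qed.
Lemma cle_sz e1 e2 : cle e1 e2 -> (sz e1 <= sz e2)%N.
Proof. by move=> h; apply: subset_leq_card; apply: cle_sub. Qed.
Lemma cle_sz_eq e1 e2 : cle e1 e2 -> (sz e2 <= sz e1)%N -> e1 = e2.
Proof.
move=> h hs; apply: cle_anti => //; apply: sub_cle.
have := subset_leqif_card (cle_sub h); case => _ <-.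
by rewrite eqn_leq hs cle_sz.
Qed.
Lemma cle_sz_lt e1 e2 : cle e1 e2 -> e1 != e2 -> (sz e1 < sz e2)%N.
Proof.
move=> h hn; rewrite ltnNge; apply/negP=> hs.
by move/eqP: hn; apply; apply: cle_sz_eq.
Qed.
Lemma sz_max e : (sz e <= n)%N.
Proof. by rewrite /sz; apply: leq_trans (max_card _) _; rewrite card_ord. Qed.
End Cube.
Section Alg.
Variables (K : fieldType) (n : nat).
Local Notation vfam := (vfam K n).
Implicit Types (A B C D : vfam).

Definition heq A B (F G : hmaps A B) := forall e e', cle e e' -> F e e' = G e e'.
Definition addH A B (F G : hmaps A B) : hmaps A B := fun e e' => F e e' + G e e'.
Definition oppH A B (F : hmaps A B) : hmaps A B := fun e e' => - F e e'.
Definition zeroH A B : hmaps A B := fun e e' => 0.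

Lemma compHE A B C (G : hmaps B C) (F : hmaps A B) e e'' x :
  compH G F e e'' x = \sum_(e' | cle e e' && cle e' e'') G e' e'' (F e e' x).
Proof. by rewrite /compH sum_lfunE; apply: eq_bigr => *; rewrite comp_lfunE. Qed.

Lemma compH_diag A B C (G : hmaps B C) (F : hmaps A B) e :
  compH G F e e = (G e e \o F e e)%VF.
Proof.
rewrite /compH (big_pred1 e) // => e'; apply/andP/eqP => [[h1 h2]|->].
  by apply/esym/cle_anti.
by rewrite cle_refl.
Qed.

Lemma compH_out A B C (G : hmaps B C) (F : hmaps A B) e e'' :
  ~~ cle e e'' -> compH G F e e'' = 0.
Proof.
move=> h; rewrite /compH big_pred0 // => e'; apply/negP => /andP[h1 h2].
by move/negP: h; apply; apply: cle_trans h2.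
Qed.

Lemma compH_resp A B C (G G' : hmaps B C) (F F' : hmaps A B) :
  heq G G' -> heq F F' -> heq (compH G F) (compH G' F').
Proof.
move=> hG hF e e'' _; apply: eq_bigr => e' /andP[h1 h2].
by rewrite hG // hF.
Qed.

Lemma compH_assoc A B C D (H : hmaps C D) (G : hmaps B C) (F : hmaps A B) e e4 :
  compH H (compH G F) e e4 = compH (compH H G) F e e4.
Proof.
apply/lfunP => x; rewrite !compHE.
rewrite (eq_bigr (fun e2 => \sum_(e1 | cle e e1 && cle e1 e2) H e2 e4 (G e1 e2 (F e e1 x)))); last first.
  by move=> e2 _; rewrite compHE linear_sum.
rewrite (exchange_big_dep (fun e1 => cle e e1 && cle e1 e4)); last first.
  by move=> e2 e1 /andP[_ h2] /andP[h3 h4]; rewrite h3 (cle_trans h4 h2).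
apply: eq_bigr => e1 /andP[h1 h2]; rewrite compHE; apply: eq_bigl => e2.
apply/andP/andP => [[/andP[_ ->] /andP[_ ->]] //|[h3 h4]].
by rewrite (cle_trans h1 h3) h4 h1 h3.
Qed.

Lemma compH_addl A B C (G1 G2 : hmaps B C) (F : hmaps A B) e e' :
  compH (addH G1 G2) F e e' = compH G1 F e e' + compH G2 F e e'.
Proof.
apply/lfunP => x; rewrite add_lfunE !compHE -big_split /=.
by apply: eq_bigr => *; rewrite add_lfunE.
Qed.
Lemma compH_addr A B C (G : hmaps B C) (F1 F2 : hmaps A B) e e' :
  compH G (addH F1 F2) e e' = compH G F1 e e' + compH G F2 e e'.
Proof.
apply/lfunP => x; rewrite add_lfunE !compHE -big_split /=.
by apply: eq_bigr => *; rewrite add_lfunE linearD.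
Qed.
Lemma compH_oppl A B C (G : hmaps B C) (F : hmaps A B) e e' :
  compH (oppH G) F e e' = - compH G F e e'.
Proof.
apply/lfunP => x; rewrite opp_lfunE !compHE -sumrN.
by apply: eq_bigr => *; rewrite opp_lfunE.
Qed.
Lemma compH_oppr A B C (G : hmaps B C) (F : hmaps A B) e e' :
  compH G (oppH F) e e' = - compH G F e e'.
Proof.
apply/lfunP => x; rewrite opp_lfunE !compHE -sumrN.
by apply: eq_bigr => *; rewrite opp_lfunE linearN.
Qed.
Lemma compH_0l A B C (F : hmaps A B) e e' : compH (zeroH B C) F e e' = 0.
Proof. by apply/lfunP => x; rewrite compHE zero_lfunE big1 // => *; rewrite zero_lfunE. Qed.
Lemma compH_0r A B C (G : hmaps B C) e e' : compH G (zeroH A B) e e' = 0.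
Proof. by apply/lfunP => x; rewrite compHE zero_lfunE big1 // => *; rewrite zero_lfunE linear0. Qed.

Definition idH A : hmaps A A := fun e e' =>
  match e =P e' with
  | ReflectT p => eq_rect e (fun x => 'Hom(A e, A x)) \1%VF e' p
  | ReflectF _ => 0 end.
Lemma idH_diag A e : idH A e e = \1%VF.
Proof. by rewrite /idH; case: eqP => // p; rewrite (eq_irrelevance p erefl). Qed.
Lemma idH_off A e e' : e != e' -> idH A e e' = 0.
Proof. by rewrite /idH; case: eqP. Qed.

Lemma compH_idr A B (F : hmaps A B) e e'' : cle e e'' -> compH F (idH A) e e'' = F e e''.
Proof.
move=> h; rewrite /compH (bigD1 e) /=; last by rewrite cle_refl h.
rewrite idH_diag comp_lfun1r big1 ?addr0 // => e' /andP[_ hn].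
by rewrite idH_off 1?eq_sym // comp_lfun0r.
Qed.
Lemma compH_idl A B (F : hmaps A B) e e'' : cle e e'' -> compH (idH B) F e e'' = F e e''.
Proof.
move=> h; rewrite /compH (bigD1 e'') /=; last by rewrite cle_refl h.
rewrite idH_diag comp_lfun1l big1 ?addr0 // => e' /andP[_ hn].
by rewrite idH_off // comp_lfun0l.
Qed.

Definition gz A B (a : nat) (F : hmaps A B) :=
  forall e e', cle e e' -> (sz e' < sz e + a)%N -> F e e' = 0.

Lemma gz_comp A B C a b (G : hmaps B C) (F : hmaps A B) :
  gz a F -> gz b G -> gz (a + b) (compH G F).
Proof.
move=> hF hG e e'' h hs; rewrite /compH big1 // => e' /andP[h1 h2].
case: (ltnP (sz e') (sz e + a)) => ha; first by rewrite hF // comp_lfun0r.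
rewrite hG ?comp_lfun0l //; apply: leq_trans hs _.
by rewrite addnA leq_add2r.
Qed.

End Alg.
Lemma heq_refl (K : fieldType) n (A B : vfam K n) (F : hmaps A B) : heq F F.
Proof. by []. Qed.

Section Perturb.
Variables (K : fieldType) (n : nat) (A : vfam K n) (D : hmaps A A).
Hypothesis hD : is_hypercube D.
Variable h : forall e, 'End(A e).
Hypothesis hh : forall e, ((D e e \o h e)%VF + (h e \o D e e)%VF) = \1%VF.

Definition diagH : hmaps A A := fun e e' =>
  match e =P e' with
  | ReflectT p => eq_rect e (fun x => 'Hom(A e, A x)) (h e) e' p
  | ReflectF _ => 0 end.
Lemma diagH_diag e : diagH e e = h e.
Proof. by rewrite /diagH; case: eqP => // p; rewrite (eq_irrelevance p erefl). Qed.

Local Notation h0 := diagH.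
Local Notation U := (addH (compH D h0) (compH h0 D)).
Local Notation M := (addH U (oppH (idH A))).

Lemma hD' : heq (compH D D) (zeroH A A).
Proof. by move=> e e' c; rewrite hD. Qed.

Lemma DU : heq (compH D U) (compH U D).
Proof.
move=> e e'' c; rewrite compH_addr compH_addl compH_assoc [compH D (compH h0 D) _ _]compH_assoc.
rewrite (compH_resp hD' (heq_refl h0) c) compH_0l add0r.
rewrite -[compH (compH h0 D) D _ _]compH_assoc.
by rewrite (compH_resp (heq_refl h0) hD' c) compH_0r addr0.
Qed.

Lemma DM : heq (compH D M) (compH M D).
Proof.
move=> e e'' c; rewrite compH_addr compH_addl compH_oppr compH_oppl.
by rewrite compH_idr // compH_idl // DU.
Qed.

Lemma gzM : gz 1 M.
Proof.
move=> e e' c hs; have ee := cle_sz_eq c; rewrite addn1 ltnS in hs.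
rewrite -(ee hs) /addH /oppH !compH_diag idH_diag diagH_diag hh.
by rewrite subrr.
Qed.

Fixpoint V k : hmaps A A := match k with
  | 0 => idH A
  | k'.+1 => addH (idH A) (oppH (compH M (V k'))) end.

Lemma DV k : heq (compH D (V k)) (compH (V k) D).
Proof.
elim: k => [|k IH] e e'' c /=; first by rewrite compH_idr // compH_idl.
rewrite compH_addr compH_addl compH_oppr compH_oppl compH_idr // compH_idl //.
congr (_ - _).
rewrite compH_assoc (compH_resp DM (heq_refl _) c) -compH_assoc.
by rewrite (compH_resp (heq_refl _) IH c) compH_assoc.
Qed.

Lemma gzV k : gz k.+1 (addH (V k.+1) (oppH (V k))).
Proof.
elim: k => [|k IH] e e' c hs.
  have hM := gzM c hs; move: hM; rewrite /= /addH /oppH compH_idr // => hM.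
  by rewrite addrAC subrr add0r hM oppr0.
have -> : addH (V k.+2) (oppH (V k.+1)) e e' =
          - compH M (addH (V k.+1) (oppH (V k))) e e'.
  rewrite compH_addr compH_oppr.
  change ((idH A e e' - compH M (V k.+1) e e') - (idH A e e' - compH M (V k) e e') = - (compH M (V k.+1) e e' + - compH M (V k) e e')).
  by rewrite !opprB addrC addrA subrK.
by rewrite (gz_comp IH gzM c) ?oppr0 // addn1.
Qed.

Lemma perturb_main : heq (addH (compH D (compH h0 (V n))) (compH (compH h0 (V n)) D)) (idH A).
Proof.
move=> e e'' c; rewrite /addH [compH D _ _ _]compH_assoc -[compH (compH h0 (V n)) D _ _]compH_assoc.
rewrite -(compH_resp (heq_refl h0) (DV n) c) compH_assoc -compH_addl.
have -> : compH U (V n) e e'' = compH M (V n) e e'' + V n e e''.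
  by rewrite [compH M _ _ _]compH_addl compH_oppl compH_idl // addrNK.
have -> : compH M (V n) e e'' = idH A e e'' - V n.+1 e e''.
  by rewrite /= /addH /oppH opprD opprK addNKr.
have hz := @gzV n _ _ c; rewrite /addH /oppH in hz.
rewrite (subr0_eq (hz _)) ?subrK //.
by rewrite addnS ltnS; apply: leq_trans (sz_max e'') (leq_addl _ _).
Qed.

End Perturb.

Lemma perturb (K : fieldType) n (A : vfam K n) (D : hmaps A A) (h : forall e, 'End(A e)) :
  is_hypercube D -> (forall e, ((D e e \o h e)%VF + (h e \o D e e)%VF) = \1%VF) ->
  exists Hc : hmaps A A, heq (addH (compH D Hc) (compH Hc D)) (idH A).
Proof. by move=> hD hh; eexists; apply: (perturb_main hD hh). Qed.
Section Contr.
Variables (K : fieldType) (V : vectType K) (d : 'End(V)).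
Definition contrS := ((d \o d^-1)%VF + (d^-1 \o d)%VF).
Definition contrH := (d^-1 \o contrS^-1)%VF.
Hypothesis dd : forall x, d (d x) = 0.
Hypothesis acyc : forall x, d x = 0 -> exists y, x = d y.

Lemma ddg x : d (d^-1%VF (d x)) = d x.
Proof. by rewrite limg_lfunVK // memv_img ?memvf. Qed.
Lemma contr_ds : (d \o contrS = d)%VF.
Proof.
apply/lfunP => x; rewrite comp_lfunE /contrS add_lfunE !comp_lfunE linearD /=.
by rewrite dd add0r ddg.
Qed.
Lemma contr_sd : (contrS \o d = d)%VF.
Proof.
apply/lfunP => x; rewrite comp_lfunE /contrS add_lfunE !comp_lfunE dd linear0 addr0.
by rewrite ddg.
Qed.
Lemma contr_ker : lker contrS == 0%VS.
Proof.
apply/lker0P => x y hxy.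
have hz : contrS (x - y) = 0 by rewrite linearB /= hxy subrr.
suff : x - y = 0 by move/eqP; rewrite subr_eq0 => /eqP.
have e1 : d (x - y) = 0 by rewrite -contr_ds comp_lfunE hz linear0.
move/acyc: e1 => [w hw]; rewrite hw in hz *.
by rewrite -(comp_lfunE contrS d) contr_sd in hz.
Qed.
Lemma contrH_spec : ((d \o contrH)%VF + (contrH \o d)%VF) = \1%VF.
Proof.
have st := lker0_compfV contr_ker; have ts := lker0_compVf contr_ker.
have td : (contrS^-1 \o d = d \o contrS^-1)%VF.
  apply/lfunP => x; rewrite !comp_lfunE; apply: (lker0P contr_ker).
  have e1 y : contrS (contrS^-1%VF y) = y by rewrite -comp_lfunE st id_lfunE.
  rewrite e1 -{1}(e1 x) -(comp_lfunE d contrS) contr_ds.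
  by rewrite -(comp_lfunE contrS d) contr_sd.
rewrite /contrH -!comp_lfunA td comp_lfunA !comp_lfunA -comp_lfunDl.
by rewrite -/contrS st.
Qed.
End Contr.
Definition mkHom (K : fieldType) (aT rT : vectType K) (f : aT -> rT) (H : linear f) : 'Hom(aT,rT) :=
  linfun (HB.pack f (GRing.isLinear.Build K aT rT *:%R f H) : {linear aT -> rT}).
Lemma mkHomE (K : fieldType) (aT rT : vectType K) (f : aT -> rT) (H : linear f) x : mkHom H x = f x.
Proof. by rewrite /mkHom lfunE. Qed.

Lemma sum_fst (U W : zmodType) I r (P : pred I) (a : I -> (U * W)%type) :
  (\sum_(i <- r | P i) a i).1 = \sum_(i <- r | P i) (a i).1.
Proof. by apply: (big_morph fst) => //. Qed.
Lemma sum_snd (U W : zmodType) I r (P : pred I) (a : I -> (U * W)%type) :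
  (\sum_(i <- r | P i) a i).2 = \sum_(i <- r | P i) (a i).2.
Proof. by apply: (big_morph snd) => //. Qed.

Lemma abel3 (V : zmodType) (a b g i : V) : -a + (-b + g) = i -> g = i + a + b.
Proof. by move=> <-; rewrite (addrC (-a)) subrK addrC addNKr. Qed.
Lemma abel3' (V : zmodType) (a b g i : V) : g + - a + - b = i -> g = i + a + b.
Proof. by move=> <-; rewrite -addrA (addrC a) addrA !subrK. Qed.

Lemma pairE (X Y : Type) (u v : (X * Y)%type) : u.1 = v.1 -> u.2 = v.2 -> u = v.
Proof. by case: u v => ? ? [? ?] /= -> ->. Qed.

Section Cone.
Variables (K : fieldType) (n : nat) (A B : vfam K n).
Variables (DA : hmaps A A) (DB : hmaps B B) (F : hmaps A B).
Hypothesis hDA : is_hypercube DA.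
Hypothesis hDB : is_hypercube DB.
Hypothesis hF : hcycle DA DB F.
Hypothesis acyc : forall e x y, DA e e x = 0 -> F e e x + DB e e y = 0 ->
  exists a b, x = - DA e e a /\ y = F e e a + DB e e b.

Definition Cv : vfam K n := fun e => ((A e * B e)%type : vectType K).

Definition coneF e e' (p : Cv e) : Cv e' := (- DA e e' p.1, F e e' p.1 + DB e e' p.2).
Arguments coneF : clear implicits.
Lemma coneF_lin e e' : linear (coneF e e').
Proof. move=> a u v; rewrite /coneF /= !linearD !linearZ /=; congr pair; rewrite /= scalerDr; exact: addrACA. Qed.
Arguments coneF_lin : clear implicits.
Definition coneD : hmaps Cv Cv := fun e e' => mkHom (coneF_lin e e').
Lemma coneDE e e' p : coneD e e' p = (- DA e e' p.1, F e e' p.1 + DB e e' p.2).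
Proof. by rewrite /coneD mkHomE. Qed.

Lemma diag0 (X : vfam K n) (D : hmaps X X) : is_hypercube D -> forall e x, D e e (D e e x) = 0.
Proof. by move=> hD e x; rewrite -comp_lfunE -compH_diag hD ?cle_refl // zero_lfunE. Qed.
Lemma Fdiag e x : F e e (DA e e x) = DB e e (F e e x).
Proof. by rewrite -!comp_lfunE -!compH_diag hF ?cle_refl. Qed.

Lemma cone_hyper : is_hypercube coneD.
Proof.
move=> e e'' c; apply/lfunP => p; rewrite compHE zero_lfunE.
apply: pairE; rewrite ?sum_fst ?sum_snd /=.
  rewrite (eq_bigr (fun e' => DA e' e'' (DA e e' p.1))); last first.
    by move=> e' _; rewrite !coneDE /= linearN opprK.
  by rewrite -compHE hDA // zero_lfunE.
rewrite (eq_bigr (fun e' => - F e' e'' (DA e e' p.1) + DB e' e'' (F e e' p.1)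
    + DB e' e'' (DB e e' p.2))); last first.
  by move=> e' _; rewrite !coneDE /= linearN linearD addrA.
rewrite !big_split /= sumrN -!compHE hDB // zero_lfunE addr0 (hF c).
by rewrite addNr.
Qed.

Lemma cone_dd e p : coneD e e (coneD e e p) = 0.
Proof. by have := cone_hyper (cle_refl e); rewrite compH_diag => /lfunP/(_ p); rewrite comp_lfunE zero_lfunE. Qed.

Lemma cone_acyc e p : coneD e e p = 0 -> exists q, p = coneD e e q.
Proof.
case: p => x y; rewrite coneDE /= => /eqP; rewrite xpair_eqE oppr_eq0 => /andP[/eqP h1 /eqP h2].
have [a [b [-> ->]]] := acyc h1 h2.
by exists (a, b); rewrite coneDE.
Qed.

Definition hcone e : 'End(Cv e) := contrH (coneD e e).
Lemma hcone_spec e : ((coneD e e \o hcone e)%VF + (hcone e \o coneD e e)%VF) = \1%VF.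
Proof. by apply: contrH_spec; [apply: cone_dd | apply: cone_acyc]. Qed.

Definition Hc : hmaps Cv Cv := compH (diagH hcone) (V coneD hcone n).
Lemma Hc_spec : heq (addH (compH coneD Hc) (compH Hc coneD)) (idH Cv).
Proof. rewrite /Hc; exact: (perturb_main cone_hyper hcone_spec). Qed.


Definition i1f e (x : A e) : Cv e := (x, 0).
Definition i2f e (y : B e) : Cv e := (0, y).
Lemma i1_lin e : linear (@i1f e).
Proof. by move=> a u v; apply: pairE; rewrite /= ?scaler0 ?addr0. Qed.
Lemma i2_lin e : linear (@i2f e).
Proof. by move=> a u v; apply: pairE; rewrite /= ?scaler0 ?addr0. Qed.
Definition p1f e (p : Cv e) : A e := p.1.
Definition p2f e (p : Cv e) : B e := p.2.
Lemma p1_lin e : linear (@p1f e). Proof. by []. Qed.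
Lemma p2_lin e : linear (@p2f e). Proof. by []. Qed.
Arguments i1_lin : clear implicits.
Arguments i2_lin : clear implicits.
Arguments p1_lin : clear implicits.
Arguments p2_lin : clear implicits.

Definition Gm : hmaps B A := fun e e' =>
  (mkHom (p1_lin e') \o Hc e e' \o mkHom (i2_lin e))%VF.
Definition HAm : hmaps A A := fun e e' =>
  (mkHom (p1_lin e') \o Hc e e' \o mkHom (i1_lin e))%VF.
Definition HBm : hmaps B B := fun e e' =>
  - (mkHom (p2_lin e') \o Hc e e' \o mkHom (i2_lin e))%VF.

Lemma GmE e e' y : Gm e e' y = (Hc e e' (0, y)).1.
Proof. by rewrite /Gm !comp_lfunE !mkHomE. Qed.
Lemma HAmE e e' x : HAm e e' x = (Hc e e' (x, 0)).1.
Proof. by rewrite /HAm !comp_lfunE !mkHomE. Qed.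
Lemma HBmE e e' y : HBm e e' y = - (Hc e e' (0, y)).2.
Proof. by rewrite /HBm opp_lfunE !comp_lfunE !mkHomE. Qed.

Lemma Hc_pair e e' (u : A e) (v : B e) : Hc e e' (u, v) = Hc e e' (u, 0) + Hc e e' (0, v).
Proof. by rewrite -linearD; congr (Hc e e' _); apply: pairE; rewrite /= ?addr0 ?add0r. Qed.

Lemma Hc_app e e'' p : cle e e'' ->
  \sum_(e' | cle e e' && cle e' e'') coneD e' e'' (Hc e e' p) +
  \sum_(e' | cle e e' && cle e' e'') Hc e' e'' (coneD e e' p) = idH Cv e e'' p.
Proof.
move=> c; have := Hc_spec c; rewrite /addH => /lfunP/(_ p).
by rewrite add_lfunE !compHE.
Qed.

Lemma idH1 e e'' p : (idH Cv e e'' p).1 = idH A e e'' p.1.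
Proof. by case: (eqVneq e e'') => [<-|ne]; rewrite ?idH_diag ?id_lfunE ?idH_off ?zero_lfunE. Qed.
Lemma idH2 e e'' p : (idH Cv e e'' p).2 = idH B e e'' p.2.
Proof. by case: (eqVneq e e'') => [<-|ne]; rewrite ?idH_diag ?id_lfunE ?idH_off ?zero_lfunE. Qed.

Lemma Gm_cycle : hcycle DB DA Gm.
Proof.
move=> e e'' c; apply/lfunP => y; rewrite !compHE.
have := congr1 fst (Hc_app (0, y) c); rewrite idH1 /= linear0 !sum_fst => H.
rewrite [X in X + _ = _](eq_bigr (fun e' => - DA e' e'' (Gm e e' y))) in H; last first.
  by move=> e' _; rewrite coneDE GmE.
rewrite [X in _ + X = _](eq_bigr (fun e' => Gm e' e'' (DB e e' y))) in H; last first.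
  by move=> e' _; rewrite GmE coneDE /= linear0 oppr0 linear0 add0r.
by move: H; rewrite sumrN => /eqP; rewrite addrC subr_eq0 => /eqP.
Qed.

Lemma GF_htpy e e'' : cle e e'' ->
  compH Gm F e e'' = idH A e e'' + compH DA HAm e e'' + compH HAm DA e e''.
Proof.
move=> c; apply/lfunP => x; rewrite !add_lfunE !compHE.
have := congr1 fst (Hc_app (x, 0) c); rewrite idH1 /= !sum_fst => H.
rewrite [X in X + _ = _](eq_bigr (fun e' => - DA e' e'' (HAm e e' x))) in H; last first.
  by move=> e' _; rewrite coneDE HAmE.
rewrite [X in _ + X = _](eq_bigr (fun e' => - HAm e' e'' (DA e e' x) + Gm e' e'' (F e e' x))) in H; last first.
  move=> e' _; rewrite coneDE /= linear0 addr0 Hc_pair HAmE GmE.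
  have -> : ((- DA e e' x, 0) : Cv e') = - ((DA e e' x, 0) : Cv e').
    by apply: pairE; rewrite /= ?oppr0.
  by rewrite linearN.
by move: H; rewrite big_split /= !sumrN; apply: abel3.
Qed.

Lemma FG_htpy e e'' : cle e e'' ->
  compH F Gm e e'' = idH B e e'' + compH DB HBm e e'' + compH HBm DB e e''.
Proof.
move=> c; apply/lfunP => y; rewrite !add_lfunE !compHE.
have := congr1 snd (Hc_app (0, y) c); rewrite idH2 /= !sum_snd => H.
rewrite [X in X + _ = _](eq_bigr (fun e' => F e' e'' (Gm e e' y) + - DB e' e'' (HBm e e' y))) in H; last first.
  by move=> e' _; rewrite coneDE HBmE GmE linearN opprK.
rewrite [X in _ + X = _](eq_bigr (fun e' => - HBm e' e'' (DB e e' y))) in H; last first.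
  by move=> e' _; rewrite coneDE /= linear0 oppr0 linear0 add0r HBmE opprK.
by move: H; rewrite big_split /= !sumrN; apply: abel3'.
Qed.

Lemma cone_equiv : hyper_htpy_equiv DA DB.
Proof.
exists F, Gm, HAm, HBm; split => //; first exact: Gm_cycle.
  split=> [e|e e'' c ne].
    by rewrite GF_htpy ?cle_refl // idH_diag.
  by rewrite GF_htpy // idH_off // add0r.
split=> [e|e e'' c ne].
  by rewrite FG_htpy ?cle_refl // idH_diag.
by rewrite FG_htpy // idH_off // add0r.
Qed.
End Cone.
Section Vertex.
Variables (K : fieldType) (V : vectType K).

Definition tpow (t : 'End(V)) k : 'End(V) := iter k (fun h => (t \o h)%VF) \1%VF.
Lemma tpow0 t x : tpow t 0 x = x. Proof. by rewrite /tpow /= id_lfunE. Qed.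
Lemma tpowS t k x : tpow t k.+1 x = t (tpow t k x).
Proof. by rewrite /tpow iterS comp_lfunE. Qed.
Lemma tpowD t a b x : tpow t (a + b) x = tpow t a (tpow t b x).
Proof. by elim: a => [|a IH]; rewrite ?add0n ?tpow0 // addSn !tpowS IH. Qed.
Lemma tpow_comm (t s : 'End(V)) k x : (forall y, t (s y) = s (t y)) -> tpow t k (s x) = s (tpow t k x).
Proof. by move=> ts; elim: k => [|k IH]; rewrite ?tpow0 // !tpowS IH ts. Qed.
Lemma tpowSr t k x : tpow t k.+1 x = tpow t k (t x).
Proof. by rewrite -addn1 tpowD tpowS tpow0. Qed.

Local Notation m := (\dim {:V}).

Lemma lker_tpow_mono t a b : (a <= b)%N -> (lker (tpow t a) <= lker (tpow t b))%VS.
Proof.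
move=> ab; apply/subvP => x; rewrite !memv_ker => /eqP h.
by rewrite -(subnK ab) tpowD h linear0.
Qed.

Lemma lker_tpow_stab t k : lker (tpow t (m + k)) = lker (tpow t m).
Proof.
have main : forall j, (j <= \dim (lker (tpow t j)))%N \/
    exists2 i, (i < j)%N & lker (tpow t i) = lker (tpow t i.+1).
  elim=> [|j [IH|[i ij IH]]]; [by left| |by right; exists i => //; apply: ltnW].
  have sub := lker_tpow_mono t (leqnSn j).
  case: (eqVneq (lker (tpow t j)) (lker (tpow t j.+1))) => [eqj|nej].
    by right; exists j.
  left; apply: leq_ltn_trans IH _; rewrite ltn_neqAle dimvS // andbT.
  by apply: contra nej => /eqP ed; rewrite eqEdim sub ed leqnn.
have [i im eqi] : exists2 i, (i < m.+1)%N & lker (tpow t i) = lker (tpow t i.+1).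
  case: (main m.+1) => // h; exfalso.
  by move: (leq_trans h (dimvS (subvf (lker (tpow t m.+1))))); rewrite ltnn.
have stab j : lker (tpow t (i + j)) = lker (tpow t i).
  elim: j => [|j IH]; first by rewrite addn0.
  rewrite -IH; apply/subv_anti/andP; split; last by apply: lker_tpow_mono; rewrite leq_add2l.
  apply/subvP => x; rewrite !memv_ker => /eqP h.
  have : tpow t j x \in lker (tpow t i.+1) by rewrite memv_ker -tpowD addSn -addnS h.
  by rewrite -eqi memv_ker -tpowD.
have -> : (m + k = i + (m - i + k))%N by rewrite addnA subnKC // -ltnS.
by rewrite stab -(stab (m - i)%N) subnKC // -ltnS.
Qed.

Variable t : 'End(V).
Local Notation Ks := (lker (tpow t m)).
Local Notation Ws := (limg (tpow t m)).

Lemma fit_cap : (Ks :&: Ws = 0)%VS.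
Proof.
apply/eqP; rewrite -subv0; apply/subvP => x /memv_capP[hk /memv_imgP[y _ hy]].
rewrite memv0; move: hk; rewrite hy memv_ker -tpowD => hyy.
have : y \in lker (tpow t (m + m)) by rewrite memv_ker.
by rewrite lker_tpow_stab memv_ker.
Qed.

Lemma fit_sum : (Ks + Ws = fullv)%VS.
Proof.
apply/eqP; rewrite eqEdim subvf /=.
have := dimv_sum_cap Ks Ws; rewrite fit_cap dimv0 addn0 => ->.
have := limg_ker_dim (tpow t m) fullv; rewrite capfv => ->.
by [].
Qed.

Lemma fit_dec v : exists2 k, k \in Ks & exists2 w, w \in Ws & v = k + w.
Proof.
have : v \in (Ks + Ws)%VS by rewrite fit_sum memvf.
by case/memv_addP => k hk [w hw ->]; exists k => //; exists w.
Qed.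
End Vertex.
Section AcycPart.
Variables (K : fieldType) (V : vectType K) (d q : 'End(V)) (S T : {vspace V}).
Hypothesis capST : (S :&: T = 0)%VS.
Hypothesis sumST : (S + T = fullv)%VS.
Hypothesis dS : forall x, x \in S -> d x \in S.
Hypothesis dT : forall x, x \in T -> d x \in T.
Hypothesis qS : forall x, x \in S -> q x \in S.
Hypothesis qinj : forall x, x \in S -> q x = 0 -> x = 0.
Hypothesis qd : forall x, q (d x) = d (q x).
Hypothesis qH : forall x, d x = 0 -> q x \in limg d.

Lemma capST0 x : x \in S -> x \in T -> x = 0.
Proof. by move=> h1 h2; apply/eqP; rewrite -memv0 -capST; apply/memv_capP. Qed.

Lemma acyc_part x : x \in S -> d x = 0 -> exists2 y, y \in S & x = d y.
Proof.
move=> xS dx.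
have qSS : (q @: S)%VS = S.
  apply/eqP; rewrite eqEdim; apply/andP; split.
    by apply/subvP => z /memv_imgP[u uS ->]; apply: qS.
  rewrite limg_dim_eq //; apply/eqP; rewrite -subv0; apply/subvP => z /memv_capP[zS].
  by rewrite memv_ker memv0 => /eqP /(qinj zS) ->.
move: xS; rewrite -{1}qSS => /memv_imgP[x' x'S hx].
have dx' : d x' = 0.
  by apply: qinj; [exact: dS | rewrite qd -hx].
have := qH dx'; rewrite -hx => /memv_imgP[z _ hz].
have : z \in (S + T)%VS by rewrite sumST memvf.
case/memv_addP => k kS [w wT hzw].
exists k => //.
have dw0 : d w = 0.
  apply: capST0; last exact: dT.
  have -> : d w = x - d k by rewrite hz hzw linearD addrC addKr.
  by apply: memvB; [rewrite hx; apply: qS | apply: dS].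
by rewrite hz hzw linearD /= dw0 addr0.
Qed.
End AcycPart.
Lemma tri_inj (K : fieldType) n (A B C : vfam K n) (P : hmaps A B) (X : hmaps C A) :
  (forall e, injective (P e e)) -> heq (compH P X) (zeroH C B) -> heq X (zeroH C A).
Proof.
move=> Pinj hPX e.
suff : forall k e'', (sz e'' < k)%N -> cle e e'' -> X e e'' = 0.
  by move=> h e'' c; apply: (h (sz e'').+1).
elim=> [//|k IH] e'' hs c.
have := hPX e e'' c; rewrite /compH (bigD1 e'') /=; last by rewrite c cle_refl.
rewrite big1 ?addr0; last first.
  move=> e' /andP[/andP[c1 c2] ne]; rewrite IH ?comp_lfun0r //.
  by apply: leq_trans (cle_sz_lt c2 ne) _; rewrite -ltnS.
move=> h; apply/lfunP => x; rewrite zero_lfunE; apply: (Pinj e'').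
by rewrite -comp_lfunE h !zero_lfunE linear0.
Qed.

Lemma DE_hyper (K : fieldType) n (A C : vfam K n) (Phi : hmaps A C) (D : hmaps C C) (DE : hmaps A A) :
  (forall e, injective (Phi e e)) -> is_hypercube D ->
  (forall e e'', cle e e'' -> compH Phi DE e e'' = compH D Phi e e'') ->
  is_hypercube DE.
Proof.
move=> Pinj hD hPD.
have hD' : heq (compH D D) (zeroH C C) by move=> e e' c; rewrite hD.
suff : heq (compH DE DE) (zeroH A A) by move=> h e e' c; rewrite h.
apply: (tri_inj Pinj) => e e'' c.
rewrite compH_assoc (compH_resp hPD (heq_refl DE) c) -compH_assoc.
rewrite (compH_resp (heq_refl D) hPD c) compH_assoc.
by rewrite (compH_resp hD' (heq_refl Phi) c) compH_0l.
Qed.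
Section VertexMain.
Variables (K : fieldType) (V : vectType K) (f d : 'End(V)) (lam : K) (N : nat).
Hypothesis dd : forall x, d (d x) = 0.
Hypothesis fd : forall x, f (d x) = d (f x).
Hypothesis hN : forall x, x \in lker d -> powsub f lam N x \in limg d.
Local Notation m := (\dim {:V}).
Local Notation tt r := (f - r *: \1)%VF.

Lemma ttE r x : tt r x = f x - r *: x.
Proof. by rewrite add_lfunE opp_lfunE scale_lfunE id_lfunE. Qed.
Lemma tt_d r x : tt r (d x) = d (tt r x).
Proof. by rewrite !ttE fd -linearZ -linearB. Qed.
Lemma tt_tt r s x : tt r (tt s x) = tt s (tt r x).
Proof. by rewrite !ttE !raddfB /= !linearZ /= !scalerA mulrC -!addrA (addrCA (s *: - f x)). Qed.
Lemma pow_d r k x : tpow (tt r) k (d x) = d (tpow (tt r) k x).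
Proof. by apply: tpow_comm => y; rewrite tt_d. Qed.
Lemma pow_pow r s k j x : tpow (tt r) k (tpow (tt s) j x) = tpow (tt s) j (tpow (tt r) k x).
Proof.
apply: tpow_comm => y; apply/esym; apply: tpow_comm => z; exact: tt_tt.
Qed.

Lemma dS_ker r x : x \in lker (tpow (tt r) m) -> d x \in lker (tpow (tt r) m).
Proof. by rewrite !memv_ker pow_d => /eqP ->; rewrite linear0. Qed.
Lemma dS_img r x : x \in limg (tpow (tt r) m) -> d x \in limg (tpow (tt r) m).
Proof. by case/memv_imgP => y _ ->; rewrite -pow_d memv_img ?memvf. Qed.
Lemma qS_ker r s j x : x \in lker (tpow (tt r) m) -> tpow (tt s) j x \in lker (tpow (tt r) m).
Proof. by rewrite !memv_ker pow_pow => /eqP ->; rewrite linear0. Qed.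
Lemma qS_img r s j x : x \in limg (tpow (tt r) m) -> tpow (tt s) j x \in limg (tpow (tt r) m).
Proof. by case/memv_imgP => y _ ->; rewrite pow_pow memv_img ?memvf. Qed.

Lemma eig_pow r x k : f x = lam *: x -> tpow (tt r) k x = (lam - r) ^+ k *: x.
Proof.
move=> fx; elim: k => [|k IH]; first by rewrite tpow0 expr0 scale1r.
by rewrite tpowS IH linearZ /= ttE fx -scalerBl scalerA exprS mulrC.
Qed.

Lemma acyc_K r : r != lam -> forall x, x \in lker (tpow (tt r) m) -> d x = 0 ->
  exists2 y, y \in lker (tpow (tt r) m) & x = d y.
Proof.
move=> rl; apply: (@acyc_part _ _ d (tpow (tt lam) N) _ (limg (tpow (tt r) m))).
- exact: fit_cap.
- exact: fit_sum.
- exact: dS_ker.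
- exact: dS_img.
- exact: qS_ker.
- elim: N => [|k IH] x xS; first by rewrite tpow0.
  rewrite tpowSr => /IH h.
  have hx : tt lam x = 0 by apply: h; have := @qS_ker r lam 1 x xS; rewrite tpowS tpow0.
  have fx : f x = lam *: x by apply/eqP; rewrite -subr_eq0 -ttE hx.
  move: xS; rewrite memv_ker eig_pow // scaler_eq0 expf_eq0 subr_eq0 eq_sym (negbTE rl) andbF /=.
  by move/eqP.
- by move=> x; rewrite pow_d.
- by move=> x dx; apply: hN; rewrite memv_ker dx.
Qed.

Lemma acyc_W : forall x, x \in limg (tpow (tt lam) m) -> d x = 0 ->
  exists2 y, y \in limg (tpow (tt lam) m) & x = d y.
Proof.
apply: (@acyc_part _ _ d (tpow (tt lam) N) _ (lker (tpow (tt lam) m))).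
- by rewrite capvC; exact: fit_cap.
- by rewrite addvC; exact: fit_sum.
- exact: dS_img.
- exact: dS_ker.
- exact: qS_img.
- move=> x xW hx; apply: (capST0 (fit_cap (tt lam))) => //.
  rewrite -(lker_tpow_stab _ N) addnC.
  by apply: (subvP (lker_tpow_mono _ (leq_addr m N))); rewrite memv_ker hx.
- by move=> x; rewrite pow_d.
- by move=> x dx; apply: hN; rewrite memv_ker dx.
Qed.
End VertexMain.
Theorem gen (K : fieldType) (n : nat)
  (C : vfam K n) (D : hmaps C C) (mu : hmaps C C) (lam : K) :
  is_hypercube D ->
  hyper_operator D mu ->
  (forall e : cube n, exists N : nat, forall x : C e,
     x \in lker (D e e) -> powsub (mu e e) lam N x \in limg (D e e)) ->
  forall (r : K) (Phi : hmaps (Evtx mu r) C)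
         (DE : hmaps (Evtx mu r) (Evtx mu r)),
    splitting_map Phi ->
    (forall e e'', cle e e'' -> compH Phi DE e e'' = compH D Phi e e'') ->
    (r = lam -> hyper_htpy_equiv DE D) /\
    (r <> lam -> hyper_htpy_equiv DE (@zero_maps K n)).
Proof.
move=> hD hmu hH r Phi DE [_ hPhi] hPD.
have Pinj e : injective (Phi e e) by move=> u v; rewrite !hPhi => /val_inj.
have hDE := DE_hyper Pinj hD hPD.
have dd e x : D e e (D e e x) = 0 by apply: diag0.
have fd e x : mu e e (D e e x) = D e e (mu e e x).
  have := hmu e e (cle_refl e); rewrite !compH_diag => /lfunP/(_ x).
  by rewrite !comp_lfunE.
have DEv e v : vsval (DE e e v) = D e e (vsval v).
  have := hPD e e (cle_refl e); rewrite !compH_diag => /lfunP/(_ v).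
  by rewrite !comp_lfunE !hPhi.
split.
- move=> rl; subst r; apply: (cone_equiv (F := Phi)) => //.
    by move=> e e'' c; rewrite hPD.
  move=> e x y hx hy; have [N hN] := hH e.
  have [k kK [w wW hyw]] := fit_dec (mu e e - lam *: \1)%VF y.
  have xK : vsval x \in geig (mu e e) lam := subvsP x.
  have hy' : vsval x + D e e y = 0 by rewrite -hPhi.
  have dw0 : D e e w = 0.
    apply: (capST0 (fit_cap (mu e e - lam *: \1)%VF)); last by apply: dS_img.
    have -> : D e e w = - (vsval x + D e e k).
      by apply/eqP; rewrite -addr_eq0 addrC -addrA -linearD /= -hyw hy'.
    by rewrite memvN memvD //; apply: dS_ker.
  have [w' w'W hw'] := acyc_W (fd e) hN wW dw0.
  exists (Subvs kK), w'; split.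
    apply: (Pinj e); rewrite linearN /= !hPhi DEv /=.
    have Dyk : D e e y = D e e k by rewrite hyw linearD /= dw0 addr0.
    by apply/eqP; rewrite -addr_eq0 -Dyk hy'.
  by rewrite hPhi /= -hw' hyw.
- move=> rl; apply: (cone_equiv (F := zeroH _ _)) => //.
  + move=> e e'' c; apply/lfunP => p; rewrite compHE zero_lfunE big1 // => *.
    by rewrite /zero_maps zero_lfunE.
  + by move=> e e'' c; rewrite compH_0l compH_0r.
  move=> e x y hx hy; have [N hN] := hH e.
  have xK : vsval x \in geig (mu e e) r := subvsP x.
  have dx : D e e (vsval x) = 0 by rewrite -DEv hx.
  have rl' : r != lam by apply/eqP.
  have [y' y'K hy'] := acyc_K (fd e) hN rl' xK dx.
  exists (- Subvs y'K), 0; split.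
    by apply: (Pinj e); rewrite !linearN opprK !hPhi /= hPhi DEv /= hy'.
  by rewrite !zero_lfunE addr0; apply: thinmx0.
Qed.

Unset Implicit Arguments.
Set Strict Implicit.

Theorem mainTheorem13 (R : realType) (n : nat)
  (C : vfam R[i] n) (D : hmaps C C) (mu : hmaps C C) (lam : R[i]) :
  is_hypercube D ->
  hyper_operator D mu ->
  (forall e : cube n, exists N : nat, forall x : C e,
     x \in lker (D e e) -> powsub (mu e e) lam N x \in limg (D e e)) ->
  forall (r : R[i]) (Phi : hmaps (Evtx mu r) C)
         (DE : hmaps (Evtx mu r) (Evtx mu r)),
    splitting_map Phi ->
    (forall e e'', cle e e'' -> compH Phi DE e e'' = compH D Phi e e'') ->
    (r = lam -> hyper_htpy_equiv DE D) /\
    (r <> lam -> hyper_htpy_equiv DE (@zero_maps R[i] n)).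
Proof. exact: (@gen R[i] n C D mu lam). Qed.
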